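(* Let $S$ be a group and $A$ a left $S$-act without zero subacts. Then: (i) $A\amalg z_1$ and $A\amalg(z_1\amalg z_2)$ are not geometrically equivalent; (ii) $A\amalg(z_1\amalg z_2)$ and $A\amalg\coprod_{i\in I}z_i$ are geometrically equivalent for every set $I$ with $|I|>1$.
   Context: A left $S$-act is a nonempty set with an action $S\times A\to A$ satisfying $1a=a$, $(st)a=s(ta)$; homomorphisms preserve the action; $\amalg$ denotes coproduct (disjoint union). A zero $S$-act is a one-element $S$-act; $z,z_1,z_2,z_i$ denote zero $S$-acts. A zero subact of $A$ is a one-element subact (an element fixed by all of $S$). For a nonempty finite set $X$, $F_X=\coprod_{x\in X}S_x$ is the free $S$-act on $X$. For an $S$-act $G$ and a relation $T\subseteq F_X\times F_X$, $T'_G=\{\mu:F_X\to G \text{ homomorphism}: T\subseteq\ker\mu\}$ and $T''_G=\bigcap_{\mu\in T'_G}\ker\mu$ (empty intersection $=F_X\times F_X$). $S$-acts $G_1,G_2$ are geometrically equivalent iff $T''_{G_1}=T''_{G_2}$ for all nonempty finite $X$ and all $T\subseteq F_X\times F_X$. *)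

(* Defs.v *)
From mathcomp Require Import all_boot.
Unset Printing Implicit Defensive.


Record group := Group {
  gcar :> Type;
  gmul : gcar -> gcar -> gcar;
  gone : gcar;
  ginv : gcar -> gcar;
  gmulA : forall x y z, gmul x (gmul y z) = gmul (gmul x y) z;
  gmul1 : forall x, gmul gone x = x;
  gmulr1 : forall x, gmul x gone = x;
  gmulV : forall x, gmul (ginv x) x = gone;
  gmulrV : forall x, gmul x (ginv x) = gone }.
Arguments gmul {g} _ _.
Arguments gone g : assert.
Arguments ginv {g} _.

(* A left S-act (carrier + action satisfying 1a = a and (st)a = s(ta)).
   Nonemptiness is imposed separately where needed (all constructed acts
   below are nonempty whenever their summands are). *)
Record act (S : group) := Act {
  acar :> Type;
  actf : S -> acar -> acar;
  act1 : forall a, actf (gone S) a = a;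
  actM : forall s t a, actf (gmul s t) a = actf s (actf t a) }.

Arguments actf {S} a0 _ _.
Arguments act1 {S} a0 _.
Arguments actM {S} a0 _ _ _.

Definition is_zero_act (S : group) (z : act S) : Prop :=
  exists c : z, forall x : z, x = c.

Definition no_zero_subacts (S : group) (A : act S) : Prop :=
  ~ exists a : A, forall s : S, actf A s a = a.

Definition coprod_actf (S : group) (A B : act S) (s : S) (x : A + B) : A + B :=
  match x with inl a => inl (actf A s a) | inr b => inr (actf B s b) end.

Lemma coprod_act1 (S : group) (A B : act S) x : coprod_actf S A B (gone S) x = x.
Proof. by case: x => y /=; rewrite act1. Qed.

Lemma coprod_actM (S : group) (A B : act S) s t x :
  coprod_actf S A B (gmul s t) x = coprod_actf S A B s (coprod_actf S A B t x).
Proof. by case: x => y /=; rewrite actM. Qed.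

Definition coprod (S : group) (A B : act S) : act S :=
  @Act S (A + B) (coprod_actf S A B) (coprod_act1 S A B) (coprod_actM S A B).

Definition bigcoprod_actf (S : group) (I : Type) (F : I -> act S) (s : S)
  (x : {i : I & F i}) : {i : I & F i} :=
  existT _ (projT1 x) (actf (F (projT1 x)) s (projT2 x)).

Lemma bigcoprod_act1 (S : group) I (F : I -> act S) x :
  bigcoprod_actf S I F (gone S) x = x.
Proof. by case: x => i y; rewrite /bigcoprod_actf /= act1. Qed.

Lemma bigcoprod_actM (S : group) I (F : I -> act S) s t x :
  bigcoprod_actf S I F (gmul s t) x = bigcoprod_actf S I F s (bigcoprod_actf S I F t x).
Proof. by case: x => i y; rewrite /bigcoprod_actf /= actM. Qed.

Definition bigcoprod (S : group) (I : Type) (F : I -> act S) : act S :=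
  @Act S {i : I & F i} (bigcoprod_actf S I F) (bigcoprod_act1 S I F) (bigcoprod_actM S I F).

(* Free S-act on X:  F_X = \coprod_{x in X} S_x, element s of S_x is (x, s). *)
Definition free_actf (S : group) (X : Type) (s : S) (p : X * S) : X * S :=
  (p.1, gmul s p.2).

Lemma free_act1 (S : group) X (p : X * S) : free_actf S X (gone S) p = p.
Proof. by case: p => x t; rewrite /free_actf /= gmul1. Qed.

Lemma free_actM (S : group) X s t (p : X * S) :
  free_actf S X (gmul s t) p = free_actf S X s (free_actf S X t p).
Proof. by case: p => x u; rewrite /free_actf /= gmulA. Qed.

Definition free_act (S : group) (X : Type) : act S :=
  @Act S (X * S) (free_actf S X) (free_act1 S X) (free_actM S X).

Definition is_hom (S : group) (A B : act S) (f : A -> B) : Prop :=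
  forall (s : S) (a : A), f (actf A s a) = actf B s (f a).

(* T''_G : intersection of the kernels of all homomorphisms F_X -> G whose
   kernel contains T (the full relation if there is none). *)
Definition closure (S : group) (G : act S) (X : Type)
  (T : free_act S X -> free_act S X -> Prop) (u v : free_act S X) : Prop :=
  forall f : free_act S X -> G, is_hom S (free_act S X) G f ->
    (forall p q, T p q -> f p = f q) -> f u = f v.

Definition geom_equiv (S : group) (G1 G2 : act S) : Prop :=
  forall (X : finType), 0 < #|X| ->
  forall (T : free_act S X -> free_act S X -> Prop) (u v : free_act S X),
    closure S G1 X T u v <-> closure S G2 X T u v.

Arguments is_zero_act {S} z.
Arguments no_zero_subacts {S} A.
Arguments coprod {S} A B.
Arguments bigcoprod {S I} F.
Arguments is_hom {S} A B f.
Arguments closure {S} G {X} T u v.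
Arguments geom_equiv {S} G1 G2.

(* Main.v *)
Require Import Defs.
From mathcomp Require Import all_boot.
From Stdlib Require Import Classical ClassicalEpsilon.

Lemma zero_fix (S : group) (z : act S) : is_zero_act z ->
  forall s (c : z), actf z s c = c.
Proof. by move=> [c0 H] s c; rewrite (H c) (H (actf z s c0)). Qed.

Lemma zero_eq (S : group) (z : act S) : is_zero_act z -> forall x y : z, x = y.
Proof. by move=> [c0 H] x y; rewrite (H x) (H y). Qed.

Lemma sep_closure (S : group) (G H : act S) :
  (forall x y : G, x <> y -> exists h : G -> H, is_hom G H h /\ h x <> h y) ->
  forall (X : Type) T (u v : free_act S X), Defs.closure H T u v -> Defs.closure G T u v.
Proof.
move=> Hs X T u v Hc f fh fT.
apply: NNPP => Hne.
have [h [hh hne]] := Hs _ _ Hne.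
apply: hne.
apply: (Hc (fun p => h (f p))).
- by move=> s a; rewrite fh hh.
- by move=> p q /fT ->.
Qed.

Definition ext_hom (S : group) (G : act S) (g : bool -> G) : free_act S bool -> G :=
  fun p => actf G p.2 (g p.1).

Lemma ext_hom_is_hom (S : group) (G : act S) g : is_hom (free_act S bool) G (ext_hom S G g).
Proof. by move=> s [x t]; rewrite /ext_hom /= actM. Qed.

Theorem proposition3p14 (S : group) (A : act S) :
  inhabited A -> no_zero_subacts A ->
  (forall z1 z2 : act S, is_zero_act z1 -> is_zero_act z2 ->
     ~ geom_equiv (coprod A z1) (coprod A (coprod z1 z2))) /\
  (forall z1 z2 : act S, is_zero_act z1 -> is_zero_act z2 ->
   forall (I : Type) (z : I -> act S), (forall i, is_zero_act (z i)) ->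
     (exists i j : I, i <> j) ->
     geom_equiv (coprod A (coprod z1 z2)) (coprod A (bigcoprod z))).
Proof.
move=> [a0] nz; split.
- move=> z1 z2 Z1 Z2 E.
  pose T := fun p q : free_act S bool => q = (p.1, gone S).
  have C1 : Defs.closure (coprod A z1) T (true, gone S) (false, gone S).
    move=> f fh fT.
    have inz : forall b, exists c, f (b, gone S) = inr c.
      move=> b; case E1: (f (b, gone S)) => [a|c]; last by exists c.
      exfalso; apply: nz; exists a => s.
      have := fT (b, s) _ erefl.
      have -> : ((b, s) : free_act S bool) = actf (free_act S bool) s (b, gone S).
        by rewrite /= /free_actf /= gmulr1.
      by rewrite fh E1 /= => [[]].
    have [c Hc] := inz true; have [d Hd] := inz false.
    by rewrite Hc Hd (zero_eq _ _ Z1 c d).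
  have := proj1 (E bool (ltac:(by rewrite card_bool)) T (true, gone S) (false, gone S)) C1.
  have [c1 _] := Z1; have [c2 _] := Z2.
  move=> /(_ (ext_hom S (coprod A (coprod z1 z2))
     (fun b => if b then inr (inl c1) else inr (inr c2)))
     (ext_hom_is_hom _ _ _)).
  rewrite /ext_hom /=.
  move=> H.
  have Hp : forall p q : bool * S, T p q ->
     coprod_actf S A (coprod z1 z2) p.2
       (if p.1 then inr (inl c1) else inr (inr c2)) =
     coprod_actf S A (coprod z1 z2) q.2
       (if q.1 then inr (inl c1) else inr (inr c2)); last by have := H Hp.
  move=> [b s] q ->; rewrite /=.
  by case: b => /=; rewrite ?(zero_fix _ _ Z1) ?(zero_fix _ _ Z2).
move=> z1 z2 Z1 Z2 I z Zi [i [j Hij]] X _ T u v.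
have [c1 _] := Z1; have [c2 _] := Z2.
have [di _] := Zi i; have [dj _] := Zi j.
split; apply: sep_closure => x y Hxy.
-
  pose h (i0 : I) (w : coprod A (bigcoprod z)) : coprod A (coprod z1 z2) :=
    match w with
    | inl a => inl a
    | inr p => if excluded_middle_informative (projT1 p = i0)
               then inr (inl c1) else inr (inr c2)
    end.
  have hh : forall i0, is_hom _ _ (h i0).
    move=> i0 s [a|[k c]] //=.
    by case: excluded_middle_informative => _ /=; rewrite ?(zero_fix _ _ Z1) ?(zero_fix _ _ Z2).
  have inj1 : forall (k : I) (c : z k) w, w <> inr (existT _ k c) ->
      h k w <> h k (inr (existT _ k c)).
    move=> k c [a|[l d]] Hne; rewrite /h /=.
    - by case: excluded_middle_informative.
    - case: excluded_middle_informative => //= Hk;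
      case: excluded_middle_informative => //= _.
      subst l; exfalso; apply: Hne; by rewrite (zero_eq _ _ (Zi k) d c).
  case: x Hxy => [a|[k c]] Hxy.
  + case: y Hxy => [b|[k d]] Hxy.
    * by exists (h i); split => // -[] E; apply: Hxy; rewrite E.
    * exists (h k); split => //; move=> E; apply: (inj1 k d (inl a)) => //.
  + exists (h k); split => //; move=> E; apply: (inj1 k c y).
    * by move=> E'; apply: Hxy; rewrite E'.
    * by rewrite E.
-
  pose h (w : coprod A (coprod z1 z2)) : coprod A (bigcoprod z) :=
    match w with
    | inl a => inl a
    | inr (inl _) => inr (existT _ i di)
    | inr (inr _) => inr (existT _ j dj)
    end.
  exists h; split.
  + move=> s [a|[c|c]] //=; by rewrite /bigcoprod_actf /= (zero_fix _ _ (Zi _)).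
  + move=> E; apply: Hxy.
    case: x y E => [a|[c|c]] [b|[d|d]] //= E.
    * by case: E => ->.
    * by rewrite (zero_eq _ _ Z1 c d).
    * by case: E => /Hij.
    * by case: E => /esym /Hij.
    * by rewrite (zero_eq _ _ Z2 c d).
Qed.
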